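(* Let $n=5$, fix pairwise distinct $i,j,k\in\{1,2,3\}$, and let $\boldsymbol{D}$ be a channel matrix of monomials. Consider offsets $p$ satisfying the alignment equations (A1)–(A8). Then: (1) Such offsets $p$ satisfying (A1)–(A8) together with all separability conditions (S1)–(S3) except the two inter-user collisions forced by (A5) and (A8) exist if $\boldsymbol{D}$ satisfies conditions (i)–(x) below; conversely, if such offsets exist then $\boldsymbol{D}$ satisfies (i)–(x). (2) Under (i)–(x), if the message $W_{jk}$ is delivered from $\mathrm{Tx}_k$ to $\mathrm{Rx}_j$ over a single interference-free feedforward backhaul link of rate $1$ (one message), and $\mathrm{Tx}_k$ does not transmit $W_{jk}$ over the channel, then every one of the $9$ messages is obtained by its intended receiver within $n=5$ dimensions, i.e. $\frac{9}{5}$ degrees of freedom are achieved with feedforward sum-rate $\Theta_{\mathrm{FF}}=1$. (3) Feedforward sum-rate $\Theta_{\mathrm{FF}}\ge 1$ is necessary to achieve $\frac{9}{5}$ degrees of freedom with $n=5$. Conditions (all congruences mod $x^5-1$): (i) $d_{ij}d_{ki}d_{jk}\equiv d_{ji}d_{ik}d_{kj}$; (ii) $d_{ii}d_{jk}d_{kj}\equiv d_{jj}d_{ik}d_{ki}\equiv d_{kk}d_{ij}d_{ji}$; (iii) $d_{ii}d_{kk}\not\equiv d_{ik}d_{ki}$; (iv) $d_{ii}d_{jj}\not\equiv d_{ij}d_{ji}$; (v) $d_{ii}d_{jk}\not\equiv d_{ik}d_{ji}$; (vi) $d_{ij}d_{jk}\not\equiv d_{ik}d_{jj}$; (vii) $d_{kk}d_{ji}\not\equiv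 d_{ki}d_{jk}$; (viii) $d_{kk}d_{jj}\not\equiv d_{kj}d_{jk}$; (ix) $d_{ii}d_{jj}d_{kk}\not\equiv d_{ij}d_{jk}d_{ki}$ (and $d_{ij}d_{jk}d_{ki}\equiv d_{ji}d_{kj}d_{ik}$); (x) $d_{kk}d_{ii}d_{jj}d_{kk}\not\equiv d_{jk}d_{kj}d_{ik}d_{ki}$, $d_{ii}d_{ii}d_{jj}d_{kk}\not\equiv d_{ij}d_{ji}d_{ik}d_{ki}$, $d_{jj}d_{ii}d_{jj}d_{kk}\not\equiv d_{ij}d_{ji}d_{jk}d_{kj}$.
   Context: Cyclic polynomial channel model of the $3$-user $X$-network. Fix $n\in\mathbb{N}$; all congruences are taken in the polynomial ring modulo $x^n-1$, so $x^a\equiv x^b$ iff $a\equiv b \pmod n$. Let $\mathcal{K}=\{1,2,3\}$. Transmitter $\mathrm{Tx}_i$ holds one message $W_{ji}$ for each receiver $\mathrm{Rx}_j$ ($9$ messages), each an element of an abelian group (binary strings of length $t$). $\mathrm{Tx}_i$ chooses offsets $p_{ji}\in\{0,\dots,n-1\}$ and transmits $u_i(x)\equiv\sum_{j}W_{ji}x^{p_{ji}}$. The channel matrix $\boldsymbol{D}=(d_{ji})$ has each $d_{ji}$ a monomial $x^k$, $k\in\mathbb{N}$, known to all. $\mathrm{Rx}_j$ observes $r_j(x)\equiv\sum_i d_{ji}u_i(x)$, whose coefficient at $x^m$ is the sum of all messages arriving at offset $m$. At $\mathrm{Rx}_a$ the dedicated signals are $d_{al}x^{p_{al}}$ ($l\in\mathcal{K}$)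 and the interfering signals are $d_{al}x^{p_{bl}}$ with $b\neq a$. Separability conditions: (S1) for each $i$, $x^{p_{1i}},x^{p_{2i}},x^{p_{3i}}$ pairwise incongruent; (S2) for each $a$, the three dedicated signals at $\mathrm{Rx}_a$ pairwise incongruent; (S3) for each $a$, every dedicated signal at $\mathrm{Rx}_a$ incongruent to every interfering signal at $\mathrm{Rx}_a$. A message is received interference-free if it occupies an offset at its intended receiver containing no other message; degrees of freedom $=M/n$ with $M$ the number of messages obtained by their intended receivers. A feedforward backhaul link from $\mathrm{Tx}_i$ to $\mathrm{Rx}_j$ of rate $1$ delivers one message $W_{ji}$ interference-free; $\Theta_{\mathrm{FF}}$ is the total number of messages sent over such links. Alignment scheme for fixed pairwise distinct $i,j,k$: (A1) $d_{ii}x^{p_{ji}}\equiv d_{ij}x^{p_{kj}}\equiv d_{ik}x^{p_{jk}}$; (A2) $d_{ii}x^{p_{ki}}\equiv d_{ij}x^{p_{jj}}\equiv d_{ik}x^{p_{kk}}$; (A3) $d_{ji}x^{p_{ki}}\equiv d_{jj}x^{p_{kj}}\equiv d_{jk}x^{p_{ik}}$; (A4) $d_{ji}x^{p_{ii}}\equiv d_{jk}x^{p_{kk}}$; (A5) $d_{jj}x^{p_{ij}}\equiv d_{jk}x^{p_{jk}}$; (A6) $d_{ki}x^{p_{ii}}\equiv d_{kj}x^{p_{jj}}\equiv d_{kk}x^{p_{ik}}$; (A7) $d_{kj}x^{p_{ij}}\equiv d_{ki}x^{p_{ji}}$; (A8) $d_{ki}x^{p_{ki}}\equiv d_{kk}x^{p_{jk}}$.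 (A5) violates (S3) at $\mathrm{Rx}_j$ (dedicated $W_{jk}$ collides with interfering $W_{ij}$), and (A8) violates (S3) at $\mathrm{Rx}_k$ (dedicated $W_{ki}$ collides with interfering $W_{jk}$); these two collisions are the exempted ones. *)

(* Defs.v *)
(* A monomial x^e modulo x^n - 1 is represented by its exponent e : nat;
   x^a == x^b (mod x^n - 1) iff a = b %[mod n]; products of monomials
   correspond to sums of exponents.
   Indices: 'I_3 = {0,1,2} stands for users {1,2,3}.
   d r t  : exponent of d_{rt} (channel from Tx_t to Rx_r).
   p r t  : offset p_{rt} (in {0..n-1}) of message W_{rt} at Tx_t. *)
From mathcomp Require Import all_boot.
Set Implicit Arguments. Unset Strict Implicit. Unset Printing Implicit Defensive.

Definition chan := 'I_3 -> 'I_3 -> nat.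
Definition offs (n : nat) := 'I_3 -> 'I_3 -> 'I_n.

(* position (exponent) at which Rx_r sees message W_{b l} sent by Tx_l *)
Definition pos (n : nat) (d : chan) (p : offs n) (r b l : 'I_3) : nat := d r l + p b l.

Definition alignment n (d : chan) (p : offs n) (i j k : 'I_3) : Prop :=
  [/\ ((d i i + p j i = d i j + p k j %[mod n]) /\ (d i j + p k j = d i k + p j k %[mod n])),
      ((d i i + p k i = d i j + p j j %[mod n]) /\ (d i j + p j j = d i k + p k k %[mod n])),
      ((d j i + p k i = d j j + p k j %[mod n]) /\ (d j j + p k j = d j k + p i k %[mod n])),
      (d j i + p i i = d j k + p k k %[mod n])
    & [/\ (d j j + p i j = d j k + p j k %[mod n]),
      ((d k i + p i i = d k j + p j j %[mod n]) /\ (d k j + p j j = d k k + p i k %[mod n])),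
      (d k j + p i j = d k i + p j i %[mod n])
    & (d k i + p k i = d k k + p j k %[mod n])]].

Definition S1 n (p : offs n) : Prop :=
  forall t a b : 'I_3, a != b -> (p a t : nat) <> p b t %[mod n].
Definition S2 n (d : chan) (p : offs n) : Prop :=
  forall a l l' : 'I_3, l != l' -> (pos d p a a l <> pos d p a a l' %[mod n]).
(* (S3) except the two collisions forced by (A5) and (A8):
   at Rx_j dedicated W_{jk} vs interfering W_{ij};
   at Rx_k dedicated W_{ki} vs interfering W_{jk}. *)
Definition S3_except n (d : chan) (p : offs n) (i j k : 'I_3) : Prop :=
  forall a l b l' : 'I_3, b != a ->
    ~ ((a, l, b, l') = (j, k, i, j)) -> ~ ((a, l, b, l') = (k, i, j, k)) ->
    (pos d p a a l <> pos d p a b l' %[mod n]).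

Definition interference_free n (d : chan) (p : offs n)
    (T : {set 'I_3 * 'I_3}) (a l : 'I_3) : Prop :=
  (a, l) \in T /\
  forall b l' : 'I_3, (b, l') \in T -> (b, l') <> (a, l) ->
    (pos d p a b l' <> pos d p a a l %[mod n]).

(* With backhaul set [B] (messages W_{al} delivered over rate-1 feedforward
   links, not transmitted over the channel), W_{al} is obtained by Rx_a. *)
Definition obtained n (d : chan) (p : offs n) (B : {set 'I_3 * 'I_3}) (a l : 'I_3) : Prop :=
  (a, l) \in B \/ interference_free d p (~: B) a l.

Definition conditions n (d : chan) (i j k : 'I_3) : Prop :=
  [/\ (d i j + d k i + d j k = d j i + d i k + d k j %[mod n]),
      ((d i i + d j k + d k j = d j j + d i k + d k i %[mod n])
                /\ (d j j + d i k + d k i = d k k + d i j + d j i %[mod n])),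
      (d i i + d k k <> d i k + d k i %[mod n]),
      (d i i + d j j <> d i j + d j i %[mod n])
    & [/\ (d i i + d j k <> d i k + d j i %[mod n]),
      (d i j + d j k <> d i k + d j j %[mod n]),
      (d k k + d j i <> d k i + d j k %[mod n])
    & [/\ (d k k + d j j <> d k j + d j k %[mod n]),
      ((d i i + d j j + d k k <> d i j + d j k + d k i %[mod n])
                /\ (d i j + d j k + d k i = d j i + d k j + d i k %[mod n]))
    & [/\ (d k k + d i i + d j j + d k k <> d j k + d k j + d i k + d k i %[mod n]),
                  (d i i + d i i + d j j + d k k <> d i j + d j i + d i k + d k i %[mod n])
                & (d j j + d i i + d j j + d k k <> d i j + d j i + d j k + d k j %[mod n])]]]].

(* Main.v *)
Require Import Defs.
From mathcomp Require Import all_boot.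
From mathcomp Require Import zify.

Lemma cover (i j k t : 'I_3) : i != j -> j != k -> i != k -> t = i \/ t = j \/ t = k.
Proof.
move: i j k t; do 4! case=> [[|[|[|//]]] ?]; move=> //= *;
first [left; exact: val_inj | right; left; exact: val_inj | right; right; exact: val_inj].
Qed.

Definition pf (d : chan) (i j k r t : 'I_3) : nat :=
  let b := d i i + d j j + 4 * d i j + 4 * d j i in
  if t == i then (if r == i then d j k + (d i i + b + 4 * d i k) + 4 * d j i
                  else if r == j then 0 else b)
  else if t == j then (if r == i then d j k + (d i i + 4 * d i k) + 4 * d j j
                  else if r == j then d i i + b + 4 * d i j else d i i + 4 * d i j)
  else (if r == i then d j i + b + 4 * d j k
        else if r == j then d i i + 4 * d i k else d i i + b + 4 * d i k).

Definition pdef (d : chan) (i j k : 'I_3) : offs 5 := fun r t => Ordinal (ltn_pmod (pf d i j k r t) (isT : 0 < 5)).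

Lemma exist_p (d : chan) (i j k : 'I_3) :
  i != j -> j != k -> i != k -> conditions 5 d i j k ->
  [/\ alignment d (pdef d i j k) i j k, S1 (pdef d i j k), S2 d (pdef d i j k)
    & S3_except d (pdef d i j k) i j k].
Proof.
move=> hij hjk hik.
have eji : (j == i) = false by apply/negbTE; rewrite eq_sym.
have ekj : (k == j) = false by apply/negbTE; rewrite eq_sym.
have eki : (k == i) = false by apply/negbTE; rewrite eq_sym.
have eij : (i == j) = false by apply/negbTE.
have ejk : (j == k) = false by apply/negbTE.
have eik : (i == k) = false by apply/negbTE.
case=> [E1 [E2 E3] C3 C4 [C5 C6 C7 [C8 [C9 C9'] [C10 C11 C12]]]].
clear C3 C5 C6 C7 C8 C9 C9' C10 C11 C12.
have cov := fun t => @cover i j k t hij hjk hik.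
split.
{ rewrite /alignment /pdef /=; rewrite /pf /= !eqxx ?eji ?ekj ?eki ?eij ?ejk ?eik /=.
  rewrite ?mod0n ?addn0; clear cov; repeat split. all: rewrite ?modnDmr. all: (clear -E1 E2 E3 C4; lia). }
{ move=> t a b; rewrite /pdef /=.
  case: (cov t) => [->|[->|->]]; case: (cov a) => [->|[->|->]]; case: (cov b) => [->|[->|->]];
  rewrite ?eqxx //= => _. all: rewrite /pf /= !eqxx ?eji ?ekj ?eki ?eij ?ejk ?eik /=; rewrite ?mod0n ?addn0 ?modnDmr; clear cov. all: (clear -E1 E2 E3 C4; lia). }
{ move=> a l l'; rewrite /pos /pdef /=.
  case: (cov a) => [->|[->|->]]; case: (cov l) => [->|[->|->]]; case: (cov l') => [->|[->|->]];
  rewrite ?eqxx //= => _. all: rewrite /pf /= !eqxx ?eji ?ekj ?eki ?eij ?ejk ?eik /=; rewrite ?mod0n ?addn0 ?modnDmr; clear cov. all: (clear -E1 E2 E3 C4; lia). }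
{ move=> a l b l'; rewrite /pos /pdef /=.
  case: (cov a) => [->|[->|->]]; case: (cov l) => [->|[->|->]];
  case: (cov b) => [->|[->|->]]; case: (cov l') => [->|[->|->]];
  rewrite ?eqxx //= => _ X1 X2; try (exfalso; (apply: X1 || apply: X2); done). all: rewrite /pf /= !eqxx ?eji ?ekj ?eki ?eij ?ejk ?eik /=; rewrite ?mod0n ?addn0 ?modnDmr; clear cov. all: (clear -E1 E2 E3 C4; lia). }
Qed.

Lemma fwd (d : chan) (p : offs 5) (i j k : 'I_3) :
  i != j -> alignment d p i j k -> S2 d p -> conditions 5 d i j k.
Proof.
move=> hij [[A1 A1'] [A2 A2'] [A3 A3'] A4 [A5 [A6 A6'] A7 A8]] HS2.
have H := HS2 i i j hij; rewrite /pos in H.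
have Hg : d i i + d j j <> d i j + d j i %[mod 5].
  clear -H A1 A1' A2 A2' A3 A3' A4 A5 A6 A6' A7 A8. lia.
have E1 : d i j + d k i + d j k = d j i + d i k + d k j %[mod 5].
  clear -A1 A1' A2 A2' A3 A3' A4 A5 A6 A6' A7 A8. lia.
have E2 : d i i + d j k + d k j = d j j + d i k + d k i %[mod 5].
  clear -A1 A1' A2 A2' A3 A3' A4 A5 A6 A6' A7 A8. lia.
have E3 : d j j + d i k + d k i = d k k + d i j + d j i %[mod 5].
  clear -A1 A1' A2 A2' A3 A3' A4 A5 A6 A6' A7 A8. lia.
clear -Hg E1 E2 E3.
repeat split; lia.
Qed.

Theorem theorem2 (d : chan) (i j k : 'I_3) :
  i != j -> j != k -> i != k ->
  (* (1) *)
  ((exists p : offs 5,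
      [/\ alignment d p i j k, S1 p, S2 d p & S3_except d p i j k])
   <-> conditions 5 d i j k)
  /\
  (* (2) *)
  (conditions 5 d i j k ->
   exists p : offs 5,
     [/\ alignment d p i j k, S1 p, S2 d p, S3_except d p i j k
       & (#|[set (j, k)]| = 1 /\ forall a l : 'I_3, obtained d p [set (j, k)] a l)])
  /\
  (* (3) *)
  (forall (p : offs 5) (B : {set 'I_3 * 'I_3}),
     alignment d p i j k ->
     (forall a l : 'I_3, obtained d p B a l) ->
     1 <= #|B|).
Proof.
move=> hij hjk hik.
split; [|split].
  split.
    by case=> p [Ha _ HS2 _]; exact: (@fwd d p i j k hij Ha HS2).
  by move=> C; exists (pdef d i j k); exact: (@exist_p d i j k hij hjk hik C).
  move=> C; have [Ha H1 H2 H3] := @exist_p d i j k hij hjk hik C.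
  exists (pdef d i j k); split => //; split; first exact: cards1.
  move=> a l; rewrite /obtained in_set1.
  have [E|ne] := eqVneq (a, l) (j, k); [by left; apply/eqP | right].
  split; first by rewrite in_setC in_set1 ne.
  move=> b l'; rewrite in_setC in_set1 => hb hne.
  case: (eqVneq b a) => [eba | nba].
    subst b; have nl : l' != l by apply/eqP => E; apply: hne; rewrite E.
    exact: (H2 a l' l nl).
  move=> E; apply: (H3 a l b l' nba _ _ (esym E)).
    by move=> [ea el eb el']; move: ne; rewrite ea el eqxx.
  by move=> [ea el eb el']; move: hb; rewrite eb el' eqxx.
move=> p B Ha Hob.
case: (set_0Vmem B) => [EB | [x hx]]; last by rewrite card_gt0; apply/set0Pn; exists x.
subst B.
have := Hob j k; rewrite /obtained in_set0 => -[//|[_ H]].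
have [_ _ _ _ [A5 _ _ _]] := Ha.
have h1 : (i, j) \in ~: set0 by rewrite in_setC in_set0.
have h2 : (i, j) <> (j, k) by case=> e _; move: hij; rewrite e eqxx.
by case: (H i j h1 h2 A5).
Qed.
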